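(* For every (nondeterministic B\''uchi) automaton $\mathcal{A}$ over $\Sigma$ there exists a deterministic B\''uchi automaton $\mathcal{D}$ such that $\mathfrak{J}(\mathcal{A})=\mathfrak{J}(\mathcal{D})$.
   Context: An automaton $\langle\Sigma,Q,\delta,Q_0,\alpha\rangle$ accepts an infinite word if some run visits $\alpha$ infinitely often; it is deterministic if $|Q_0|=1$ and $|\delta(q,\sigma)|=1$ for all $q,\sigma$. For $w\in\Sigma^\omega$, $\Psi(w)\in\mathbb{N}_\infty^\Sigma$ gives the number of occurrences of each letter ($\infty$ if infinite); $w\sim w'$ iff $\Psi(w)=\Psi(w')$; $\mathfrak{J}(\mathcal{A})=\{w\in\Sigma^\omega:\exists w'\sim w,\ w'\in\mathfrak{L}(\mathcal{A})\}$. *)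

(* Defs.v *)
From mathcomp Require Import all_boot.
Unset Printing Implicit Defensive.

Definition word (Sigma : Type) := nat -> Sigma.

Record automaton (Sigma : finType) := Automaton {
  state : finType;
  delta : state -> Sigma -> {set state};
  init  : {set state};
  acc   : {set state}
}.
Arguments state {Sigma} a.
Arguments delta {Sigma a} _ _.
Arguments init {Sigma} a.
Arguments acc {Sigma} a.

Definition is_run {Sigma : finType} (A : automaton Sigma) (w : word Sigma)
  (r : nat -> state A) : Prop :=
  r 0 \in init A /\ forall i, r i.+1 \in delta (r i) (w i).

Definition buchi_accepting {Sigma : finType} (A : automaton Sigma)
  (r : nat -> state A) : Prop :=
  forall N, exists i, N <= i /\ r i \in acc A.

Definition lang {Sigma : finType} (A : automaton Sigma) (w : word Sigma) : Prop :=
  exists r, is_run A w r /\ buchi_accepting A r.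

Definition deterministic {Sigma : finType} (A : automaton Sigma) : Prop :=
  #|init A| = 1 /\ forall (q : state A) (s : Sigma), #|delta q s| = 1.

(* N_infty = option nat, None standing for infinity.
   Psi_is w a c : "Psi(w)(a) = c", i.e. the number of occurrences of the
   letter a in w is c. *)
Definition Psi_is {Sigma : finType} (w : word Sigma) (a : Sigma)
  (c : option nat) : Prop :=
  match c with
  | None => forall N, exists i, N <= i /\ w i = a
  | Some n => exists N, (forall i, N <= i -> w i != a) /\
                        \sum_(i < N) (w i == a) = n
  end.

Definition parikh_equiv {Sigma : finType} (w w' : word Sigma) : Prop :=
  forall a c, Psi_is w a c <-> Psi_is w' a c.

Definition JJ {Sigma : finType} (A : automaton Sigma) (w : word Sigma) : Prop :=
  exists w', parikh_equiv w' w /\ lang A w'.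

(* Main.v *)
Require Import Defs.
From mathcomp Require Import all_boot.
From Stdlib Require Import Classical ClassicalEpsilon.
Set Implicit Arguments. Unset Strict Implicit.

Definition pdec (P : Prop) : bool :=
  if excluded_middle_informative P then true else false.
Lemma pdecE P : pdec P = true <-> P.
Proof. by rewrite /pdec; case: excluded_middle_informative. Qed.

Lemma fin_bound (X : finType) (P : X -> nat -> Prop) :
  (forall x, exists n, P x n) -> exists M, forall x, exists n, n < M /\ P x n.
Proof.
move=> H.
suff: forall s : seq X, exists M, forall x, x \in s -> exists n, n < M /\ P x n.
  by case/(_ (enum X)) => M HM; exists M => x; apply: HM; rewrite mem_enum.
elim=> [|y s [M IH]]; first by exists 0.
have [n Hn] := H y.
exists (maxn M n.+1) => x; rewrite inE; case/orP=> [/eqP->|xs].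
  by exists n; split=> //; rewrite leq_max ltnSn orbT.
by have [k [k1 k2]] := IH x xs; exists k; split=> //; rewrite leq_max k1.
Qed.

Lemma pigeon (X : finType) (P : nat -> X -> Prop) :
  (forall N, exists i, N <= i /\ exists x, P i x) ->
  exists x, forall N, exists i, N <= i /\ P i x.
Proof.
move=> H; apply: NNPP => Hn.
have H1 : forall x, exists N, forall i, N <= i -> ~ P i x.
  move=> x; apply: NNPP => Hx; apply: Hn; exists x => N.
  apply: NNPP => HN; apply: Hx; exists N => i Hi Pi; apply: HN; by exists i.
have [M HM] := fin_bound H1.
have [i [Mi [x Px]]] := H M.
have [n [nM Hn']] := HM x; apply: (Hn' i) => //.
exact: leq_trans (ltnW nM) Mi.
Qed.

Lemma sum_ext (f : nat -> bool) N M : (forall i, N <= i -> f i = false) ->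
  N <= M -> \sum_(i < M) f i = \sum_(i < N) f i.
Proof.
move=> Hf; elim: M => [|M IH]; first by rewrite leqn0 => /eqP->.
rewrite leq_eqVlt => /orP[/eqP->//|HNM].
by rewrite big_ord_recr /= IH // (Hf M) // addn0.
Qed.

Lemma psi_fin (S : finType) (w : word S) a N : (forall i, N <= i -> w i != a) ->
  forall c, Psi_is w a c <-> c = Some (\sum_(i < N) (w i == a)).
Proof.
move=> H; have H1 : forall i, N <= i -> (w i == a) = false by move=> i /H /negbTE.
case=> [n|] /=; split.
- case=> N' [H' <-]; congr Some.
  have H2 : forall i, N' <= i -> (w i == a) = false by move=> i /H' /negbTE.
  rewrite -(sum_ext (f := fun i => w i == a) H1 (leq_maxl N N')).
  by rewrite -(sum_ext (f := fun i => w i == a) H2 (leq_maxr N N')).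
- by case=> ->; exists N.
- by move=> /(_ N) [i [Ni wi]]; move: (H i Ni); rewrite wi eqxx.
- by [].
Qed.

Lemma psi_inf (S : finType) (w : word S) a :
  (forall N, exists i, N <= i /\ w i = a) -> forall c, Psi_is w a c <-> c = None.
Proof.
move=> H [n|] /=; split => //.
by case=> N [HN _]; have [i [Ni wi]] := H N; move: (HN i Ni); rewrite wi eqxx.
Qed.

Lemma parikhI (S : finType) (w w' : word S) :
 (forall a, ((forall N, exists i, N <= i /\ w i = a) /\ (forall N, exists i, N <= i /\ w' i = a)) \/
  (exists N N', (forall i, N <= i -> w i != a) /\ (forall i, N' <= i -> w' i != a) /\
     \sum_(i < N) (w i == a) = \sum_(i < N') (w' i == a))) -> parikh_equiv w w'.
Proof.
move=> H a c; case: (H a) => [[h1 h2]|[N [N' [h1 [h2 e]]]]].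
  by split=> hc; [apply/(psi_inf h2); apply/(psi_inf h1)|apply/(psi_inf h1); apply/(psi_inf h2)].
by split=> hc; [apply/(psi_fin h2); rewrite -e; apply/(psi_fin h1)
               |apply/(psi_fin h1); rewrite e; apply/(psi_fin h2)].
Qed.

Lemma parikh_sym (S : finType) (w w' : word S) : parikh_equiv w w' -> parikh_equiv w' w.
Proof. by move=> H a c; split => /(H a c). Qed.
Lemma parikh_trans (S : finType) (w1 w2 w3 : word S) :
  parikh_equiv w1 w2 -> parikh_equiv w2 w3 -> parikh_equiv w1 w3.
Proof. by move=> H1 H2 a c; split => [/(H1 a c)/(H2 a c)|/(H2 a c)/(H1 a c)]. Qed.

Lemma sum_count (S : eqType) (f : nat -> S) a N :
  \sum_(i < N) (f i == a) = count (pred1 a) (mkseq f N).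
Proof.
elim: N => [|N IH]; first by rewrite big_ord0.
by rewrite big_ord_recr IH /mkseq -[in RHS](addn1 N) iotaD map_cat count_cat /= addn0 add0n.
Qed.

Section Aut.
Variables (Sigma : finType) (A : automaton Sigma).
Notation St := (state A).

Fixpoint reach (s : St) (u : seq Sigma) (t : St) : Prop :=
  match u with [::] => s = t | x :: u' => exists s', s' \in delta s x /\ reach s' u' t end.

Lemma reach_cat s u v t : reach s (u ++ v) t <-> exists m, reach s u m /\ reach m v t.
Proof.
elim: u s => [|x u IH] s /=; first by split; [exists s | case=> m [-> ]].
split.
  case=> s' [Hs' /IH [m [H1 H2]]]; exists m; split=> //; by exists s'.
case=> m [[s' [Hs' H1]] H2]; exists s'; split=> //; apply/IH; by exists m.
Qed.

Lemma reach_fun (x0 : Sigma) s u t : reach s u t -> exists f : nat -> St,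
  f 0 = s /\ f (size u) = t /\ forall i, i < size u -> f i.+1 \in delta (f i) (nth x0 u i).
Proof.
elim: u s => [|x u IH] s /=; first by move=> ->; exists (fun _ => t).
case=> s' [Hs' /IH [g [g0 [gt gd]]]].
exists (fun i => if i is j.+1 then g j else s); split=> //; split=> //.
by case=> [|i] /=; [rewrite g0 | apply: gd].
Qed.

Definition seg (w : word Sigma) n k := [seq w i | i <- iota n k].

Lemma run_reach (w : word Sigma) (r : nat -> St) :
  (forall i, r i.+1 \in delta (r i) (w i)) ->
  forall k n, reach (r n) (seg w n k) (r (n + k)).
Proof.
move=> H; elim=> [|k IH] n /=; first by rewrite addn0.
by exists (r n.+1); split=> //; rewrite addnS -addSn; apply: IH.
Qed.

Definition reachI (I : {set Sigma}) s t := exists y, all (fun b => b \in I) y /\ reach s y t.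

Definition Good (I : {set Sigma}) := [set q : St | pdec (q \in acc A /\ exists v, v != [::] /\ reach q v q /\
                                       (forall b, b \in I <-> b \in v))].
Definition S0 (I : {set Sigma}) := [set t : St | pdec (exists s, s \in init A /\ reachI I s t)].
Definition step1 (I : {set Sigma}) (S : {set St}) x :=
  [set t : St | pdec (exists s t', s \in S /\ t' \in delta s x /\ reachI I t' t)].
Definition proj (I : {set Sigma}) u := [seq x <- u | x \notin I].

Lemma proj_nil (I : {set Sigma}) (y : seq Sigma) : all (fun b => b \in I) y -> proj I y = [::].
Proof. by elim: y => //= x y IH /andP[-> /IH]. Qed.

Lemma closure (I : {set Sigma}) : forall u s t, reach s u t -> forall S : {set St},
  (forall s', reachI I s s' -> s' \in S) -> t \in foldl (step1 I) S (proj I u).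
Proof.
elim=> [|x u IH] s t /=; first by move=> -> S HS; apply: HS; exists [::].
case=> s1 [Hs1 Hr] S HS; case Hx: (x \in I) => /=.
  apply: (IH s1) => // s' [y [Hy Hy']]; apply: HS; exists (x :: y).
  by split; [rewrite /= Hx | exists s1].
apply: (IH s1) => // s' Hs'; rewrite inE; apply/pdecE.
by exists s, s1; split; [apply: HS; exists [::] | split].
Qed.

Lemma unclosure (I : {set Sigma}) : forall p (S : {set St}) t, all (fun x => x \notin I) p ->
  t \in foldl (step1 I) S p -> exists s u, s \in S /\ proj I u = p /\ reach s u t.
Proof.
elim=> [|x p IH] S t /=; first by move=> _ Ht; exists t, [::].
case/andP=> Hx Hp /(IH _ _ Hp) [s1 [u1 [Hs1 [Hu1 Hr1]]]].
move: Hs1; rewrite inE => /pdecE [s [t' [Hs [Ht' [y [Hy Hry]]]]]].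
exists s, (x :: y ++ u1); split=> //; split.
  by have := proj_nil Hy; rewrite -Hu1 /proj /= Hx filter_cat => ->.
by exists t'; split=> //; apply/reach_cat; exists s1.
Qed.

Lemma count_proj (I : {set Sigma}) a u : a \notin I -> count (pred1 a) (proj I u) = count (pred1 a) u.
Proof.
move=> Ha; rewrite count_filter; apply: eq_count => x /=.
by case: eqP => //= ->; rewrite Ha.
Qed.

End Aut.

Section Step2.
Variable (Sigma : finType).

Definition step2 (I T : {set Sigma}) (x : Sigma) : {set Sigma} :=
  if I \subset x |: T then set0 else x |: T.

Lemma occ (I : {set Sigma}) (w : word Sigma) (T : nat -> {set Sigma}) i j b :
  (forall l, i <= l < j -> T l.+1 = step2 I (T l) (w l)) -> b \in I -> b \notin T i ->
  i < j -> T j = set0 -> exists l, i <= l < j /\ w l = b.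
Proof.
move=> HT bI bT ij Tj; apply: NNPP => Hn.
have H : forall d, i + d <= j -> b \notin T (i + d) /\ (0 < d -> T (i + d) != set0).
  elim=> [|d IH] Hd; first by rewrite addn0.
  have Hd' : i + d < j by rewrite -addnS.
  have [IH1 _] := IH (ltnW Hd').
  have wb : w (i + d) != b.
    by apply/eqP => wb; apply: Hn; exists (i + d); rewrite leq_addr Hd' wb.
  have nb : b \notin w (i + d) |: T (i + d) by rewrite !inE negb_or eq_sym wb.
  rewrite addnS HT ?leq_addr ?Hd' // /step2.
  have -> : (I \subset w (i + d) |: T (i + d)) = false.
    by apply/negbTE/negP => /subsetP /(_ b bI); apply/negP.
  split=> // _; apply/set0Pn; exists (w (i + d)); rewrite !inE eqxx.
  done.
have := H (j - i); rewrite subnKC ?(ltnW ij) // => /(_ (leqnn j)) [_ H2].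
by move: H2; rewrite subn_gt0 ij Tj eqxx => /(_ isT).
Qed.

Lemma reset (I : {set Sigma}) (w : word Sigma) (T : nat -> {set Sigma}) i j :
  (forall l, i <= l < j -> T l.+1 = step2 I (T l) (w l)) -> i < j ->
  (forall b, b \in I -> exists l, i <= l < j /\ w l = b) ->
  exists l, i < l <= j /\ T l = set0.
Proof.
move=> HT ij Hocc.
have H : forall d, i + d <= j -> (exists l, i < l <= i + d /\ T l = set0) \/
     (forall b, (exists l, i <= l < i + d /\ w l = b) -> b \in T (i + d)).
  elim=> [|d IH] Hd.
    by right=> b [l [/andP[H1 H2] _]]; move: H2; rewrite addn0 ltnNge H1.
  have Hd' : i + d < j by rewrite -addnS.
  case: (IH (ltnW Hd')) => [[l [/andP[l1 l2] Tl]]|IH2].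
    by left; exists l; rewrite l1 Tl addnS (leq_trans l2 (leqnSn _)).
  have HT' := HT (i + d); rewrite leq_addr Hd' /step2 in HT'.
  have {}HT' := HT' isT.
  rewrite addnS; case: ifP HT' => Hsub HT'.
    by left; exists (i + d).+1; rewrite HT' ltnS leq_addr leqnn.
  rewrite HT'.
  right=> b [l [/andP[l1 l2] wl]]; rewrite !inE.
  move: l2; rewrite ltnS leq_eqVlt => /orP[/eqP e|l2].
    by rewrite -wl e eqxx.
  by rewrite IH2 ?orbT //; exists l; rewrite l1 l2.
have := H (j - i); rewrite subnKC ?(ltnW ij) // => /(_ (leqnn j)) [//|Hall].
exists j; rewrite ij leqnn; split=> //.
have jp : j = (j.-1).+1 by rewrite prednK // (leq_ltn_trans _ ij).
have Hj1 : i <= j.-1 < j by apply/andP; split; [rewrite -ltnS -jp | rewrite {2}jp].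
move: (HT _ Hj1); rewrite -jp /step2; case: ifP => // Hsub Tj.
exfalso; move/negbT: Hsub => /negP; apply; rewrite -Tj; apply/subsetP => b bI.
by apply: Hall; apply: Hocc.
Qed.

End Step2.

Section Det.
Variables (Sigma : finType) (A : automaton Sigma).
Notation St := (state A).

Definition Ph := option ({set St} + {set Sigma})%type.
Definition DSt : finType := {ffun {set Sigma} -> option ({set St} + {set Sigma})}.

Definition stepT (I : {set Sigma}) (ph : option ({set St} + {set Sigma})) (x : Sigma)
  : option ({set St} + {set Sigma}) :=
  match ph with
  | Some (inl S1) => if x \in I then
        (if [exists q, (q \in S1) && (q \in Good A I)] then Some (inr (step2 I set0 x)) else None)
      else Some (inl (step1 (A:=A) I S1 x))
  | Some (inr T) => if x \in I then Some (inr (step2 I T x)) else None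
  | None => None
  end.

Definition stepD (f : DSt) (x : Sigma) : DSt := [ffun I => stepT I (f I) x].
Definition d0 : DSt := [ffun I => Some (inl (S0 A I))].
Definition accD : {set DSt} := [set f : DSt | [exists I, f I == Some (inr set0)]].
Definition DA : automaton Sigma :=
  @Automaton Sigma DSt (fun f x => [set stepD f x]) [set d0] accD.

Lemma detD : deterministic DA.
Proof. by split; [apply: cards1 | move=> q s; apply: cards1]. Qed.

Fixpoint rD (w : word Sigma) n : DSt := if n is m.+1 then stepD (rD w m) (w m) else d0.

Lemma rD_run w : is_run DA w (rD w).
Proof. by split; [rewrite inE | move=> i; rewrite /= inE]. Qed.

Lemma run_rD w r : is_run DA w r -> forall i, r i = rD w i.
Proof.
case=> [H0 HS]; elim=> [|i IH]; first by move: H0; rewrite inE => /eqP.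
by move: (HS i); rewrite /= inE IH => /eqP.
Qed.

Lemma rDS (w : word Sigma) i (I : {set Sigma}) : rD w i.+1 I = stepT I (rD w i I) (w i).
Proof. by rewrite /= ffunE. Qed.

Lemma seg_rcons (w : word Sigma) n k : seg w n k.+1 = rcons (seg w n k) (w (n + k)).
Proof. by rewrite /seg -addn1 iotaD map_cat cats1. Qed.

Lemma track1 (w : word Sigma) (I : {set Sigma}) j : (forall i, i < j -> w i \notin I) ->
  rD w j I = Some (inl (foldl (step1 (A:=A) I) (S0 A I) (seg w 0 j))).
Proof.
elim: j => [|j IH] H; first by rewrite /= ffunE.
rewrite rDS IH; last by move=> i ij; apply: H; apply: ltnW.
by rewrite seg_rcons foldl_rcons /= (negbTE (H j (ltnSn j))).
Qed.

Definition Tf (w : word Sigma) (I : {set Sigma}) j := if rD w j I is Some (inr T) then T else set0.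

Lemma track2 (w : word Sigma) (I : {set Sigma}) m S : rD w m I = Some (inl S) ->
  [exists q, (q \in S) && (q \in Good A I)] -> (forall j, m <= j -> w j \in I) ->
  (forall j, m < j -> rD w j I = Some (inr (Tf w I j))) /\
  (forall j, m <= j -> Tf w I j.+1 = step2 I (Tf w I j) (w j)).
Proof.
move=> Hm Hq HI.
have H1 : forall d, rD w (m + d).+1 I = Some (inr (Tf w I (m + d).+1)) /\
                    Tf w I (m + d).+1 = step2 I (Tf w I (m + d)) (w (m + d)).
  elim=> [|d [IH1 IH2]].
    by rewrite addn0 /Tf rDS Hm /= HI // Hq.
  rewrite addnS /Tf rDS -/(Tf w I (m + d).+1) IH1 /= HI ?addnS ?leq_addr //.
  by rewrite -addnS leq_addr.
split.
  move=> j mj; have := H1 (j - m).-1.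
  by rewrite -!addnS prednK ?subn_gt0 // subnKC ?(ltnW mj) //; case.
move=> j mj; have := H1 (j - m); rewrite subnKC //; by case.
Qed.

End Det.

Section Lasso.
Variables (Sigma : finType) (A : automaton Sigma).
Notation St := (state A).

Lemma lasso (I : {set Sigma}) s0 u0 q : s0 \in init A -> reach s0 u0 q -> q \in Good A I ->
  exists w', lang A w' /\ (forall a, a \in I -> forall N, exists i, N <= i /\ w' i = a) /\
    (forall i, size u0 <= i -> w' i \in I) /\ mkseq w' (size u0) = u0.
Proof.
move=> Hs0 Hu0; rewrite inE => /pdecE [qacc [v [vn [Hv Hvl]]]].
case: v vn Hv Hvl => [//|x0 v'] _ Hv Hvl; set v := x0 :: v' in Hv Hvl.
have n0 : 0 < size v by [].
have [f [f0 [fn fd]]] := reach_fun x0 Hu0.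
have [g [g0 [gn gd]]] := reach_fun x0 Hv.
set n := size v in n0 gn gd; set k := size u0 in fn fd *.
pose w' i := if i < k then nth x0 u0 i else nth x0 v ((i - k) %% n).
pose r' i := if i < k then f i else g ((i - k) %% n).
have gstep : forall j, g (j.+1 %% n) \in delta (g (j %% n)) (nth x0 v (j %% n)).
  move=> j; have jn : j %% n < n := ltn_pmod j n0.
  rewrite modnS; case: ifP => Hd; last exact: gd.
  have e1 : (j %% n).+1 %% n = 0.
    by rewrite -addn1 modnDml addn1; apply/eqP.
  have e : (j %% n).+1 = n.
    apply/eqP; rewrite eqn_leq jn /= leqNgt; apply/negP => Hlt.
    by move: e1; rewrite modn_small.
  by have := gd _ jn; rewrite e gn g0.
exists w'; split; last split; last split.
- exists r'; split; first split.
  + rewrite /r'; case: ifP => Hk; first by rewrite f0.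
    have k0 : k = 0 by apply/eqP; rewrite -leqn0 leqNgt Hk.
    by rewrite mod0n g0 -fn k0 f0.
  + move=> i; rewrite /r' /w'; case: (ltnP i.+1 k) => H1.
      by rewrite (ltnW H1); apply: fd; apply: ltnW.
    case: (ltnP i k) => H2.
      have e : i.+1 = k by apply/eqP; rewrite eqn_leq H1 H2.
      by rewrite e subnn mod0n g0 -fn -e; apply: fd; rewrite e.
    by rewrite subSn //; apply: gstep.
  + move=> N; exists (k + N * n); split.
      exact: leq_trans (leq_pmulr N n0) (leq_addl k _).
    by rewrite /r' ltnNge leq_addr /= addKn modnMl g0.
- move=> a aI N; have av : a \in v by apply/Hvl.
  exists (k + (N * n + index a v)); split.
    by apply: leq_trans (leq_addl k _); apply: leq_trans (leq_addr _ _); apply: leq_pmulr.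
  have ia : index a v < n by rewrite /n index_mem.
  rewrite /w' ltnNge leq_addr /= addKn modnMDl modn_small //.
  exact: nth_index.
- move=> i ki; rewrite /w' ltnNge ki /=; apply/Hvl; apply: mem_nth; exact: ltn_pmod.
- rewrite /mkseq -[RHS](mkseq_nth x0 u0) /mkseq -/k.
  apply/eq_in_map => i.
  by rewrite mem_iota add0n => /andP[_ Hi]; rewrite /w' Hi.
Qed.

End Lasso.

Section Main.
Variables (Sigma : finType) (A : automaton Sigma).
Notation St := (state A).

Lemma sound (w : word Sigma) : lang (DA A) w -> exists w', parikh_equiv w' w /\ lang A w'.
Proof.
case=> r [Hr Hacc]; have E := run_rD Hr.
have : forall N, exists i, N <= i /\ exists I, rD A w i I = Some (inr set0).
  move=> N; have [i [Ni Hi]] := Hacc N; exists i; split=> //.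
  by move: Hi; rewrite E inE => /existsP [I /eqP HI]; exists I.
case/pigeon => I HI.
pose isP1 (p : option ({set St} + {set Sigma})) := if p is Some (inl _) then true else false.
have Hnone : forall i, rD A w i I <> None.
  move=> i Hi; have [j [ij Hj]] := HI i.
  have : forall d, rD A w (i + d) I = None.
    by elim=> [|d IH]; [rewrite addn0 | rewrite addnS rDS IH].
  by move/(_ (j - i)); rewrite subnKC // Hj.
have HP1 : forall i, ~~ isP1 (rD A w i I) -> ~~ isP1 (rD A w i.+1 I).
  by move=> i; rewrite rDS; case: (rD A w i I) => [[S|T]|] //= _; case: (w i \in I).
have Hex : exists m, ~~ isP1 (rD A w m I).
  by have [j [_ Hj]] := HI 0; exists j; rewrite Hj.
case: (ex_minnP Hex) => m Hm Hmin.
have Hpre : forall j, j < m -> isP1 (rD A w j I).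
  move=> j jm; apply: contraTT jm => H; rewrite -leqNgt; exact: Hmin.
have Hpost : forall j, m <= j -> ~~ isP1 (rD A w j I).
  move=> j mj; rewrite -(subnKC mj); elim: (j - m) => [|d IH]; first by rewrite addn0.
  by rewrite addnS; apply: HP1.
have [k Hmk] : exists k, m = k.+1.
  case: m Hm {Hmin Hpre Hpost} => [|k]; last by exists k.
  by rewrite /= ffunE.
have Hk : forall j, j < k -> w j \notin I.
  move=> j jk; apply/negP => wj.
  have := Hpre j.+1; rewrite Hmk ltnS jk => /(_ isT).
  have := Hpre j; rewrite Hmk ltnS (ltnW jk) => /(_ isT).
  rewrite rDS; case: (rD A w j I) => [[S|T]|] //= _; rewrite wj; by case: ifP.
have T1 := track1 A Hk.
have [q qS qG] : exists2 q, q \in foldl (step1 (A:=A) I) (S0 A I) (seg w 0 k) & q \in Good A I.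
  have := Hpost m (leqnn m); have := Hnone m.
  rewrite Hmk rDS T1 /=; case: ifP => wk //; case: existsP => //.
  by case=> q /andP[q1 q2] _ _; exists q.
have wkI : w k \in I.
  by have := Hpost m (leqnn m); rewrite Hmk rDS T1 /=; case: ifP.
have HwI : forall j, k <= j -> w j \in I.
  move=> j; rewrite leq_eqVlt => /orP[/eqP <- //|kj].
  have H1 := Hpost j; rewrite Hmk kj in H1; have {}H1 := H1 isT.
  have H2 := Hnone j.+1; rewrite rDS in H2.
  by move: H1 H2; case: (rD A w j I) => [[S|T]|] //= _; case: ifP.
have Hq : [exists q0, (q0 \in foldl (step1 (A:=A) I) (S0 A I) (seg w 0 k)) && (q0 \in Good A I)].
  by apply/existsP; exists q; rewrite qS qG.
have [Tr1 Tr2] := track2 T1 Hq HwI.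
have Hinf : forall b, b \in I -> forall N, exists i, N <= i /\ w i = b.
  move=> b bI N.
  have [i [Ni Hi]] := HI (maxn N k.+1).
  have [j [ij Hj]] := HI i.+1.
  have Ti : Tf A w I i = set0 by rewrite /Tf Hi.
  have Tj : Tf A w I j = set0 by rewrite /Tf Hj.
  have ki : k <= i by apply: leq_trans Ni; rewrite leq_max leqnSn orbT.
  have HT : forall l, i <= l < j -> Tf A w I l.+1 = step2 I (Tf A w I l) (w l).
    by move=> l /andP[il _]; apply: Tr2; exact: leq_trans ki il.
  have bT : b \notin Tf A w I i by rewrite Ti inE.
  have [l [/andP[il lj] wl]] := occ HT bI bT ij Tj.
  exists l; split=> //; apply: leq_trans il; apply: leq_trans Ni; exact: leq_maxl.
have Hall : all (fun x => x \notin I) (seg w 0 k).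
  by apply/allP => x /mapP [i]; rewrite mem_iota add0n => /andP [_ ik] ->; apply: Hk.
have [s [u1 [Hs [Hu1 Hr1]]]] := unclosure Hall qS.
move: Hs; rewrite inE => /pdecE [s0 [Hs0 [y [Hy Hry]]]].
have Hr0 : reach s0 (y ++ u1) q by apply/reach_cat; exists s.
have Hpr : proj I (y ++ u1) = seg w 0 k by rewrite /proj filter_cat -/(proj I y) proj_nil.
have [w' [Lw' [Hw'inf [Hw'I Hw'seq]]]] := lasso Hs0 Hr0 qG.
exists w'; split => //; apply: parikhI => a; case aI: (a \in I).
  by left; split; [apply: Hw'inf | apply: Hinf].
right; exists (size (y ++ u1)), k; split; [|split].
- by move=> i Hi; apply/eqP => e; move: (Hw'I i Hi); rewrite e aI.
- by move=> i Hi; apply/eqP => e; move: (HwI i Hi); rewrite e aI.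
rewrite !sum_count Hw'seq -[mkseq w k]/(seg w 0 k) -Hpr count_proj //.
by rewrite aI.
Qed.

End Main.

Section Main2.
Variables (Sigma : finType) (A : automaton Sigma).
Notation St := (state A).

Lemma complete (w : word Sigma) : lang A w -> exists w', parikh_equiv w' w /\ lang (DA A) w'.
Proof.
case=> r [[r0 rS] racc].
pose I := [set a | pdec (forall N, exists i, N <= i /\ w i = a)].
have HI : forall a, a \in I <-> forall N, exists i, N <= i /\ w i = a.
  by move=> a; rewrite inE; apply: pdecE.
have [M0 HM0'] : exists M0, forall a, exists n, n < M0 /\
    (a \notin I -> forall i, n <= i -> w i != a).
  apply: fin_bound => a; case aI: (a \in I); first by exists 0.
  apply: NNPP => H; move/negbT: aI => /negP; apply; apply/HI => N.
  apply: NNPP => H2; apply: H; exists N => _ i Ni; apply/eqP => wi; apply: H2; by exists i.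
have HM0 : forall i, M0 <= i -> w i \in I.
  move=> i Mi; apply/negPn/negP => Hn; have [n [nM Hn']] := HM0' (w i).
  by move: (Hn' Hn i (leq_trans (ltnW nM) Mi)); rewrite eqxx.
have [q Hq] : exists q, forall N, exists i, N <= i /\ (r i = q /\ q \in acc A).
  apply: pigeon => N; have [i [Ni Hi]] := racc N; exists i; split=> //; by exists (r i).
have [t1 [Mt1 [rt1 qacc]]] := Hq M0.
have [M1 HM1] : exists M1, forall b, exists n, n < M1 /\
    (b \in I -> exists k, t1 <= k < n /\ w k = b).
  apply: fin_bound => b; case bI: (b \in I); last by exists 0.
  have [k [tk wk]] := (proj1 (HI b) bI) t1; exists k.+1 => _.
  by exists k; rewrite tk ltnSn.
have [t2 [Mt2 [rt2 _]]] := Hq (maxn M1 t1.+1).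
have t12 : t1 < t2 by apply: leq_trans Mt2; rewrite leq_max leqnn orbT.
have M12 : M1 <= t2 by apply: leq_trans Mt2; rewrite leq_max leqnn.
pose v := seg w t1 (t2 - t1).
have Hv : reach q v q.
  by have := run_reach rS (t2 - t1) t1; rewrite subnKC ?(ltnW t12) // rt1 rt2.
have qG : q \in Good A I.
  rewrite inE; apply/pdecE; split=> //; exists v; split; [|split=> //].
    by rewrite -size_eq0 /v /seg size_map size_iota subn_eq0 -ltnNge.
  move=> b; split.
    move=> bI; have [n [nM1 Hn]] := HM1 b; have [k [/andP[tk kn] wk]] := Hn bI.
    apply/mapP; exists k => //; rewrite mem_iota tk subnKC ?(ltnW t12) //.
    exact: leq_trans kn (leq_trans (ltnW nM1) M12).
  case/mapP => k; rewrite mem_iota => /andP[tk _] ->; apply: HM0; exact: leq_trans Mt1 tk.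
pose p := proj I (seg w 0 t1).
pose x0 := w 0.
pose w'' i := if i < size p then nth x0 p i else w (t1 + (i - size p)).
have Hp : forall i, i < size p -> w'' i \notin I.
  move=> i ip; rewrite /w'' ip; have := mem_nth x0 ip; rewrite mem_filter => /andP[] //.
have Hseg : seg w'' 0 (size p) = p.
  rewrite /seg -[RHS](mkseq_nth x0 p) /mkseq; apply/eq_in_map => i.
  by rewrite mem_iota add0n => /andP[_ ip]; rewrite /w'' ip.
have Hsuf : forall j, size p <= j -> w'' j = w (t1 + (j - size p)).
  by move=> j; rewrite /w'' ltnNge => ->.
have HsufI : forall j, size p <= j -> w'' j \in I.
  by move=> j pj; rewrite Hsuf // HM0 //; exact: leq_trans Mt1 (leq_addr _ _).
have T1 := track1 A Hp; rewrite Hseg in T1.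
have qS : q \in foldl (step1 (A:=A) I) (S0 A I) p.
  have := run_reach rS t1 0; rewrite add0n rt1 => Hr.
  apply: (closure Hr) => s' Hs'; rewrite inE; apply/pdecE; by exists (r 0).
have Hq' : [exists q0, (q0 \in foldl (step1 (A:=A) I) (S0 A I) p) && (q0 \in Good A I)].
  by apply/existsP; exists q; rewrite qS qG.
have [Tr1 Tr2] := track2 T1 Hq' HsufI.
exists w''; split; last first.
  exists (rD A w''); split; first exact: rD_run.
  move=> N; pose i := maxn N (size p).+1.
  have [M2 HM2] : exists M2, forall b, exists n, n < M2 /\
      (b \in I -> exists l, i <= l < n /\ w'' l = b).
    apply: fin_bound => b; case bI: (b \in I); last by exists 0.
    have [k [tk wk]] := (proj1 (HI b) bI) (t1 + i).
    have t1k : t1 <= k by exact: leq_trans (leq_addr i t1) tk.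
    have tk' : i <= k - t1 by rewrite leq_subRL.
    exists (size p + (k - t1)).+1 => _; exists (size p + (k - t1)).
    rewrite ltnSn andbT Hsuf ?leq_addr // addKn subnKC // wk; split=> //.
    exact: leq_trans tk' (leq_addl _ _).
  have ip : (size p).+1 <= i by rewrite leq_max leqnn orbT.
  pose j := maxn M2 i.+1.
  have ij : i < j by rewrite leq_max leqnn orbT.
  have HT : forall l, i <= l < j -> Tf A w'' I l.+1 = step2 I (Tf A w'' I l) (w'' l).
    by move=> l /andP[il _]; apply: Tr2; exact: leq_trans (ltnW ip) il.
  have Hocc : forall b, b \in I -> exists l, i <= l < j /\ w'' l = b.
    move=> b bI; have [n [nM Hn]] := HM2 b; have [l [/andP[il ln] wl]] := Hn bI.
    exists l; rewrite il (leq_trans ln) //; apply: leq_trans (ltnW nM) _.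
    by rewrite leq_max leqnn.
  have [l [/andP[il lj] Tl]] := reset HT ij Hocc.
  exists l; split.
    by apply: leq_trans (ltnW il); exact: leq_maxl.
  rewrite inE; apply/existsP; exists I; rewrite Tr1 ?Tl //.
  exact: leq_trans ip (ltnW il).
apply: parikhI => a; case aI: (a \in I).
  left; split; last by apply/HI.
  move=> N; have [k [tk wk]] := (proj1 (HI a) aI) (t1 + N).
  have t1k : t1 <= k by exact: leq_trans (leq_addr N t1) tk.
  have tk' : N <= k - t1 by rewrite leq_subRL.
  exists (size p + (k - t1)); split; first exact: leq_trans tk' (leq_addl _ _).
  by rewrite Hsuf ?leq_addr // addKn subnKC.
right; exists (size p), t1; split; [|split].
- by move=> i pi; apply/eqP => e; move: (HsufI i pi); rewrite e aI.
- by move=> i ti; apply/eqP => e; move: (HM0 i (leq_trans Mt1 ti)); rewrite e aI.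
rewrite !sum_count -[mkseq w'' _]/(seg w'' 0 (size p)) Hseg /p count_proj //.
by rewrite aI.
Qed.

End Main2.

Unset Implicit Arguments.

Theorem proposition3 (Sigma : finType) (A : automaton Sigma) :
  exists D : automaton Sigma, deterministic D /\
    (forall w : word Sigma, JJ A w <-> JJ D w).
Proof.
exists (DA A); split; first exact: detD.
move=> w; split.
  case=> w1 [e1 L1]; have [w2 [e2 L2]] := complete L1.
  by exists w2; split=> //; exact: parikh_trans e2 e1.
case=> w1 [e1 L1]; have [w2 [e2 L2]] := sound L1.
by exists w2; split=> //; exact: parikh_trans e2 e1.
Qed.
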